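(* In the setting of the context, let $\varphi:TW\to W\times\mathbb{C}^N$ be the bundle map $\varphi(X)=\sum_{j=1}^N\tilde\Omega_{Nj}(X)\,\mathbf{e}_j$. Then $\varphi$ is an isomorphism at every point of $W$ if and only if $P_{N,i_{k,0}}\neq 0$ for all $k=1,\dots,n$ at every point of $W$, where $i_{k,0}:=m_1+\dots+m_{k-1}+1$ (the index of the first row/column of the $k$-th block).
   Context: Let $N\ge1$, $W\subset\mathbb{C}^N$ open, and $T,\tilde\Omega,B_\infty=\mathrm{diag}(\lambda_1,\dots,\lambda_N)$ define an extended generalized Okubo system on $\mathbb{P}^1\times W$: $T$ is an $N\times N$ matrix of holomorphic functions, $\tilde\Omega$ an $N\times N$ matrix of holomorphic $1$-forms, $\lambda_i-\lambda_j\notin\mathbb{Z}\setminus\{0\}$ for $i\ne j$, and $[T,\tilde\Omega]=0$, $\tilde\Omega\wedge\tilde\Omega=0$, $dT+\tilde\Omega+[\tilde\Omega,B_\infty]=0$, $d\tilde\Omega=0$. Assume there is an invertible holomorphic matrix $P$ on $W$ with $P^{-1}TP=Z_1\oplus\cdots\oplus Z_n$ and $P^{-1}\tilde\Omega P=-(dZ_1\oplus\cdots\oplus dZ_n)$, where $m_1+\dots+m_n=N$, $\Lambda_k$ is the $m_k\times m_k$ matrix with $1$'s on the superdiagonal and zeros elsewhere, $Z_k=\sum_{l=0}^{m_k-1}z_{k,l}\Lambda_k^l$, the $z_{k,0}$ are pairwise distinct on $W$, and the holomorphic functions $(z_{k,l})_{k,l}$ form a coordinate system on $W$. $\mathbf{e}_1,\dots,\mathbf{e}_N$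 is the standard basis of $\mathbb{C}^N$. *)

(* Defs.v *)
From HB Require Import structures.
From mathcomp Require Import all_boot all_order all_algebra.
Set Implicit Arguments. Unset Strict Implicit. Unset Printing Implicit Defensive.
Import Order.TTheory GRing.Theory Num.Theory.
Local Open Scope ring_scope.

Section Okubo.
Variables (C : numClosedFieldType) (N : nat).

(* l^1 norm on C^N (row vectors); equivalent to any norm on C^N *)
Definition vnorm (v : 'rV[C]_N) : C := \sum_(i < N) `|v 0 i|.

Definition open_set (W : {pred 'rV[C]_N}) : Prop :=
  forall w, w \in W -> exists2 r : C, 0 < r &
    forall v, vnorm (v - w) < r -> v \in W.

Definition is_diff (f : 'rV[C]_N -> C) (w l : 'rV[C]_N) : Prop :=
  forall eps : C, 0 < eps -> exists2 d : C, 0 < d &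
    forall h : 'rV[C]_N, vnorm h < d ->
      `|f (w + h) - f w - \sum_(i < N) l 0 i * h 0 i| <= eps * vnorm h.

Definition holo (W : {pred 'rV[C]_N}) (f : 'rV[C]_N -> C) : Prop :=
  forall w, w \in W -> exists l, is_diff f w l.

(* (z_a)_a is a holomorphic coordinate system on W: injective, holomorphic,
   with invertible Jacobian at every point (biholomorphic onto an open set) *)
Definition coord_system (W : {pred 'rV[C]_N}) (F : 'rV[C]_N -> 'rV[C]_N) : Prop :=
  {in W &, injective F} /\
  forall w, w \in W -> exists2 J : 'M[C]_N, J \in unitmx &
    forall a : 'I_N, is_diff (fun v => F v 0 a) w (row a J).

(* A matrix of 1-forms Omega = sum_l Om_l dx_l is encoded by Om : point -> 'I_N -> 'M_N;
   its value on a tangent vector X : *)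
Definition OmX (Om : 'rV[C]_N -> 'I_N -> 'M[C]_N) (w X : 'rV[C]_N) : 'M[C]_N :=
  \sum_(l < N) X 0 l *: Om w l.

(* blocks: sizes m : 'I_n -> nat, block k starts at index start m k (0-based) *)
Definition start n (m : 'I_n -> nat) (k : 'I_n) : nat :=
  (\sum_(j < n | (j < k)%N) m j)%N.

(* Z_1 (+) ... (+) Z_n with Z_k = sum_l z_{k,l} Lambda_k^l *)
Definition Zmat n (m : 'I_n -> nat) (z : 'I_n -> nat -> 'rV[C]_N -> C)
  (w : 'rV[C]_N) : 'M[C]_N :=
  \matrix_(a < N, b < N) \sum_(k < n)
     if [&& (start m k <= a)%N, (a <= b)%N & (b < start m k + m k)%N]
     then z k (b - a)%N w else 0.

(* the coordinate map w |-> (z_{k,l}(w))_{k,l}, ordered block by block *)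
Definition zvec n (m : 'I_n -> nat) (z : 'I_n -> nat -> 'rV[C]_N -> C)
  (w : 'rV[C]_N) : 'rV[C]_N :=
  \row_(a < N) \sum_(k < n)
     if (start m k <= a < start m k + m k)%N then z k (a - start m k)%N w else 0.

Definition phi (Om : 'rV[C]_N -> 'I_N -> 'M[C]_N) (iN : 'I_N) (w X : 'rV[C]_N)
  : 'rV[C]_N :=
  \sum_(j < N) (OmX Om w X) iN j *: delta_mx 0 j.

End Okubo.

(* Main.v *)
Require Import Defs.
From HB Require Import structures.
From mathcomp Require Import all_boot all_order all_algebra.
From mathcomp Require Import zify ring.
Import Order.TTheory GRing.Theory Num.Theory.
Local Open Scope ring_scope.

Section Blocks.
Variables (n N : nat) (m : 'I_n -> nat).
Hypothesis Hm : forall k, (0 < m k)%N.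
Hypothesis HmN : (\sum_(k < n) m k)%N = N.

Definition S (t : nat) := (\sum_(j < n | (j < t)%N) m j)%N.

Lemma S_mono t1 t2 : (t1 <= t2)%N -> (S t1 <= S t2)%N.
Proof.
move=> le12; rewrite /S [X in (_ <= X)%N](bigID (fun j : 'I_n => (j < t1)%N)) /=.
rewrite [X in (_ <= X + _)%N](eq_bigl (fun j : 'I_n => (j < t1)%N)) ?leq_addr //.
by move=> j /=; apply/idP/idP => [/andP[]//|h]; rewrite h andbT (leq_trans h le12).
Qed.

Lemma S_succ (k : 'I_n) : S k.+1 = (S k + m k)%N.
Proof.
rewrite /S (bigD1 k) //= addnC; congr (_ + _)%N.
by apply: eq_bigl => j; rewrite ltnS andbC -ltn_neqAle.
Qed.

Lemma S_n : S n = N.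
Proof. by rewrite -HmN; apply: eq_bigl => j; rewrite ltn_ord. Qed.

Lemma start_S (k : 'I_n) : start m k = S k.
Proof. by []. Qed.

Definition inb (k : 'I_n) (c : nat) := (start m k <= c < start m k + m k)%N.

Lemma inb_lt (k k' : 'I_n) c c' : (k < k')%N -> inb k c -> inb k' c' -> (c < c')%N.
Proof.
move=> kk /andP[_ h1] /andP[h2 _]; move: h1 h2; rewrite !start_S -S_succ.
have := @S_mono k.+1 k' kk; lia.
Qed.

Lemma inb_uniq k k' c : inb k c -> inb k' c -> k = k'.
Proof.
move=> h h'; case: (ltngtP k k') => [lt|lt|/val_inj//].
  by have := @inb_lt k k' c c lt h h'; rewrite ltnn.
by have := @inb_lt k' k c c lt h' h; rewrite ltnn.
Qed.
Arguments inb_uniq {k k' c}.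

Lemma inb_ltN k c : inb k c -> (c < N)%N.
Proof.
case/andP=> _; rewrite start_S -S_succ -S_n => h.
apply: (leq_trans h); apply: S_mono; exact: ltn_ord.
Qed.
Arguments inb_ltN {k c}.

Lemma find_step (g : nat -> nat) c t : (g 0 <= c)%N -> (c < g t)%N ->
  exists2 u, (u < t)%N & (g u <= c < g u.+1)%N.
Proof.
elim: t => [|t IH] h0 ht; first by move: ht; rewrite ltnNge h0.
case: (ltnP c (g t)) => h.
  by have [u hu hu'] := IH h0 h; exists u => //; rewrite ltnS ltnW.
by exists t => //; rewrite h ht.
Qed.

Lemma inb_ex c : (c < N)%N -> exists k, inb k c.
Proof.
move=> hc.
have h0 : (S 0 <= c)%N by rewrite /S big1 // => j; rewrite ltn0.
have hn : (c < S n)%N by rewrite S_n.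
have [u hu hu'] := @find_step S c n h0 hn.
by exists (Ordinal hu); rewrite /inb start_S -S_succ.
Qed.


Variables (C : numClosedFieldType) (iN : 'I_N).

Definition cnd (k : 'I_n) (a b : nat) :=
  [&& (start m k <= a)%N, (a <= b)%N & (b < start m k + m k)%N].

Definition Y0 (Y : 'rV[C]_N) (c : nat) : C := Y 0 (insubd iN c).

Definition Toe (Y : 'rV[C]_N) : 'M[C]_N :=
  \matrix_(a < N, b < N) \sum_(k < n)
     if cnd k a b then Y0 Y (start m k + (b - a))%N else 0.

Lemma sum_uniq (F : 'I_n -> C) (P : pred 'I_n) k :
  P k -> (forall k', P k' -> k' = k) ->
  \sum_(k' < n) (if P k' then F k' else 0) = F k.
Proof.
move=> Pk U; rewrite (bigD1 k) //= Pk big1 ?addr0 // => k' nk'.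
case: ifP => // /U ek; by rewrite ek eqxx in nk'.
Qed.

Lemma cnd_inb k a b : cnd k a b -> inb k b /\ inb k (start m k + (b - a)).
Proof. by rewrite /cnd /inb => /and3P[h1 h2 h3]; lia. Qed.
Arguments cnd_inb {k a b}.

Lemma ToeE_blk Y {k} (a : 'I_N) {b : 'I_N} : inb k b ->
  Toe Y a b = if (start m k <= a <= b)%N then Y0 Y (start m k + (b - a))%N else 0.
Proof.
move=> hb; rewrite mxE; case: ifP => hab.
  apply: (@sum_uniq (fun k => Y0 Y (start m k + (b - a))%N)).
    by move: hb hab; rewrite /cnd /inb; lia.
  by move=> k' /cnd_inb[h _]; exact: inb_uniq h hb.
apply: big1 => k' _; case: ifP => // h; have [h1 _] := cnd_inb h.
have ek := inb_uniq h1 hb; subst k'; move: h hab; rewrite /cnd; lia.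
Qed.

Lemma ToeE_none Y (a b : 'I_N) : (forall k, ~~ cnd k a b) -> Toe Y a b = 0.
Proof. by move=> H; rewrite mxE big1 // => k _; rewrite (negbTE (H k)). Qed.

Lemma Y0E Y (c : 'I_N) : Y0 Y c = Y 0 c.
Proof. by rewrite /Y0; congr (Y 0 _); apply: val_inj; rewrite val_insubd ltn_ord. Qed.

Lemma ordN c : (c < N)%N -> exists i : 'I_N, val i = c.
Proof. by move=> h; exists (Ordinal h). Qed.
Arguments ordN {c}.

Lemma comb (p : 'rV[C]_N) :
  (forall Y : 'rV[C]_N, p *m Toe Y = 0 -> Y = 0) <->
  (forall (k : 'I_n) (a : 'I_N), nat_of_ord a = start m k -> p 0 a != 0).
Proof.
split => [H k a ha | H Y hY].
  apply/negP => /eqP pa.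
  have hk := Hm k.
  have [c0 hc0] : exists c0 : 'I_N, val c0 = (start m k + m k - 1)%N.
    by apply: ordN; apply: (@inb_ltN k); rewrite /inb; lia.
  pose Y : 'rV[C]_N := \row_c (if val c == (start m k + m k - 1)%N then 1 else 0).
  suff : Y = 0 by move/rowP/(_ c0); rewrite !mxE hc0 eqxx => /eqP; rewrite oner_eq0.
  apply: H; apply/rowP => b; rewrite !mxE; apply: big1 => a' _.
  case: (eqVneq a' a) => [->|na]; first by rewrite pa mul0r.
  rewrite mxE big1 ?mulr0 // => k' _; case: ifP => // hc.
  have [hb hi] := cnd_inb hc.
  have hiN := inb_ltN hi.
  rewrite /Y0 mxE val_insubd hiN; case: eqP => // he.
  have hik : inb k (start m k' + (b - a'))%N by rewrite /inb he; lia.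
  have ek := inb_uniq hi hik; subst k'.
  have : nat_of_ord a' != nat_of_ord a by [].
  move=> hne; exfalso; move: hc he hne; rewrite /cnd ha; lia.
have key : forall (k : 'I_n) d, (d < m k)%N -> Y0 Y (start m k + d) = 0.
  move=> k; elim/ltn_ind => d IH hd.
  have hbk : inb k (start m k + d) by rewrite /inb; lia.
  have [b hb] := ordN (inb_ltN hbk).
  have [a0 ha0] : exists a0 : 'I_N, val a0 = start m k.
    by apply: ordN; apply: (@inb_ltN k); rewrite /inb; lia.
  have hkb : inb k b by rewrite /inb hb.
  have := H k a0 ha0.
  move/rowP: hY => /(_ b); rewrite !mxE (bigD1 a0) //= big1.
    rewrite addr0 (ToeE_blk Y a0 hkb) hb ha0 leqnn leq_addr /=.
    by rewrite addKn => /eqP; rewrite mulf_eq0 => /orP[/eqP->|/eqP->]; rewrite ?eqxx.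
  move=> a na; rewrite (ToeE_blk Y a hkb) hb.
  case: ifP => hab; last by rewrite mulr0.
  have : nat_of_ord a != nat_of_ord a0 by [].
  rewrite ha0 => hne; rewrite IH ?mulr0 //; move: hab hne; lia.
apply/rowP => c; rewrite mxE.
have [k hk] := @inb_ex c (ltn_ord c).
rewrite -Y0E; have -> : nat_of_ord c = (start m k + (c - start m k))%N by move: hk; rewrite /inb; lia.
by apply: key; move: hk; rewrite /inb; lia.
Qed.

End Blocks.
Section Aux.
Variables (C : numClosedFieldType) (N : nat).

Lemma vnorm_ge0 (h : 'rV[C]_N) : 0 <= vnorm h.
Proof. by apply: sumr_ge0 => i _; exact: normr_ge0. Qed.

Lemma is_diff_ext (f g : 'rV[C]_N -> C) w l :
  (forall v, f v = g v) -> is_diff f w l -> is_diff g w l.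
Proof.
move=> fg H eps he; have [d hd Hd] := H eps he; exists d => // h hh.
by rewrite -!fg; apply: Hd.
Qed.

Lemma is_diff0 w : is_diff (fun _ : 'rV[C]_N => 0 : C) w 0.
Proof.
move=> eps he; exists 1 => // h _.
rewrite big1 ?subr0 ?normr0; last by move=> i _; rewrite mxE mul0r.
by apply: mulr_ge0; [exact: ltW | exact: vnorm_ge0].
Qed.

Lemma is_diff_uniq (f : 'rV[C]_N -> C) w l1 l2 : is_diff f w l1 -> is_diff f w l2 -> l1 = l2.
Proof.
move=> H1 H2; apply/rowP => i; apply/eqP; rewrite -subr_eq0; apply: contraT => hne.
set del := `|l1 0 i - l2 0 i|.
have hdel : 0 < del by rewrite normr_gt0.
have he : 0 < del / 4%:R by rewrite divr_gt0 // ltr0n.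
have [d1 hd1 Hd1] := H1 _ he; have [d2 hd2 Hd2] := H2 _ he.
have [t ht [ht1 ht2]] : exists2 t : C, 0 < t & t < d1 /\ t < d2.
  have : (d1 <= d2) || (d2 <= d1) by apply: real_leVge; apply: gtr0_real.
  have h2 (x : C) : 0 < x -> x / 2%:R < x.
    by move=> hx; rewrite gtr_pMr // (@invf_lt1 C) ?ltr0n // ltr1n.
  have h2' (x : C) : 0 < x -> 0 < x / 2%:R by move=> hx; rewrite divr_gt0 // ltr0n.
  case/orP => hle.
    by exists (d1 / 2%:R); [exact: h2' | split; [exact: h2 | exact: lt_le_trans (h2 _ hd1) hle]].
  by exists (d2 / 2%:R); [exact: h2' | split; [exact: lt_le_trans (h2 _ hd2) hle | exact: h2]].
pose h : 'rV[C]_N := t *: delta_mx 0 i.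
have hv : vnorm h = t.
  rewrite /vnorm (bigD1 i) //= big1 ?addr0.
    by rewrite !mxE !eqxx mulr1 gtr0_norm.
  by move=> j hj; rewrite !mxE (negbTE hj) andbF mulr0 normr0.
have hs (l : 'rV[C]_N) : \sum_(j < N) l 0 j * h 0 j = l 0 i * t.
  rewrite (bigD1 i) //= big1 ?addr0.
    by rewrite !mxE !eqxx mulr1.
  by move=> j hj; rewrite !mxE (negbTE hj) andbF mulr0 mulr0.
have E1 := Hd1 h; have E2 := Hd2 h.
rewrite hv !hs in E1 E2; have {E1}E1 := E1 ht1; have {E2}E2 := E2 ht2.
have : del * t <= del / 4%:R * t + del / 4%:R * t.
  have -> : del * t = `|(f (w + h) - f w - l2 0 i * t) - (f (w + h) - f w - l1 0 i * t)|.
    have -> : del * t = `|(l1 0 i - l2 0 i) * t| by rewrite normrM (gtr0_norm ht).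
    by congr `|_|; ring.
  apply: le_trans (ler_normB _ _) _; exact: lerD.
have -> : del / 4%:R * t + del / 4%:R * t = (del * t) / 2%:R.
  by field.
have hdt : 0 < del * t by apply: mulr_gt0.
by rewrite ler_pdivlMr ?ltr0n // ger_pMr // (ler_nat C 2 1).
Qed.
End Aux.
Arguments comb {n N m} Hm HmN {C} iN p.
Arguments Toe {n N} m {C} iN Y.
Arguments ToeE_blk {n N m} HmN {C} iN Y {k} a {b} _.
Arguments ToeE_none {n N m C} iN Y a b _.
Arguments cnd_inb {n N m} HmN {k a b} _.
Arguments cnd {n} m k a b.
Arguments inb {n} m k c.
Arguments Y0E {N C} iN Y c.
Arguments is_diff_uniq {C N f w l1 l2} _ _.
Arguments inb_ltN {n N m} HmN {k c} _.
Arguments ordN {N c} _.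
Arguments inb_uniq {n N m} HmN {k k' c} _ _.

Theorem mainTheorem3
  (C : numClosedFieldType) (N : nat) (HN : (0 < N)%N)
  (iN : 'I_N) (HiN : nat_of_ord iN = N.-1)
  (W : {pred 'rV[C]_N}) (HW : open_set W)
  (T : 'rV[C]_N -> 'M[C]_N) (Om : 'rV[C]_N -> 'I_N -> 'M[C]_N)
  (lam : 'I_N -> C)
  (Hlam : forall i j : 'I_N, i != j ->
     forall z : int, z != 0 -> lam i - lam j != z%:~R)
  (* [T, Omega] = 0 *)
  (HTOm : forall w, w \in W -> forall l, T w *m Om w l = Om w l *m T w)
  (* Omega /\ Omega = 0 *)
  (HOmOm : forall w, w \in W -> forall l l',
     Om w l *m Om w l' = Om w l' *m Om w l)
  (* dT + Omega + [Omega, B_inf] = 0 *)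
  (HdT : forall w, w \in W -> forall i j : 'I_N,
     is_diff (fun v => T v i j) w
       (\row_(l < N) - (Om w l + (Om w l *m diag_mx (\row_k lam k)
                                   - diag_mx (\row_k lam k) *m Om w l)) i j))
  (* d Omega = 0 (Omega holomorphic and closed) *)
  (HdOm : forall w, w \in W -> forall i j : 'I_N,
     exists2 D : 'M[C]_N, D^T = D &
       forall l : 'I_N, is_diff (fun v => Om v l i j) w (row l D))
  (P : 'rV[C]_N -> 'M[C]_N)
  (HPhol : forall a b : 'I_N, holo W (fun v => P v a b))
  (HPinv : forall w, w \in W -> P w \in unitmx)
  (n : nat) (m : 'I_n -> nat) (Hm : forall k, (0 < m k)%N)
  (HmN : (\sum_(k < n) m k)%N = N)
  (z : 'I_n -> nat -> 'rV[C]_N -> C)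
  (HPT : forall w, w \in W -> invmx (P w) *m T w *m P w = Zmat m z w)
  (HPOm : forall w, w \in W -> forall a b : 'I_N,
     is_diff (fun v => Zmat m z v a b) w
       (\row_(l < N) - (invmx (P w) *m Om w l *m P w) a b))
  (Hdist : forall w, w \in W -> forall k k' : 'I_n, k != k' -> z k 0%N w != z k' 0%N w)
  (Hcoord : coord_system W (zvec m z)) :
  (forall w, w \in W -> bijective (phi Om iN w)) <->
  (forall w, w \in W -> forall (k : 'I_n) (a : 'I_N),
      nat_of_ord a = start m k -> P w iN a != 0).
Proof.
suff pt : forall w, w \in W -> (bijective (phi Om iN w) <->
   (forall (k : 'I_n) (a : 'I_N), nat_of_ord a = start m k -> P w iN a != 0)).
  by split => H w hw; apply/(pt w hw); apply: H.
move=> w hw.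
have hP := HPinv w hw.
have [_ hJ] := Hcoord; have [J hJu hJd] := hJ w hw.
have hJt : J^T \in unitmx by rewrite unitmx_tr.
have hQ : invmx (P w) \in unitmx by rewrite unitmx_inv.
pose M l := invmx (P w) *m Om w l *m P w.
have hOm l : Om w l = P w *m M l *m invmx (P w).
  by rewrite /M !mulmxA mulmxV // mul1mx mulmxK.
have hMe : forall (X : 'rV[C]_N) (a b : 'I_N),
    \sum_(l < N) X 0 l * M l a b = - Toe m iN (X *m J^T) a b.
  move=> X a b.
  case: (boolP [exists k : 'I_n, cnd m k a b]) => [/existsP[k hk]|hn].
    have [hb hi] := cnd_inb HmN hk.
    have [c hc] := ordN (inb_ltN HmN hi).
    have hz : forall v, zvec m z v 0 c = Zmat m z v a b.
      move=> v; rewrite !mxE.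
      transitivity (z k (b - a)%N v).
        rewrite (@sum_uniq n C (fun k => z k (c - start m k)%N v) (fun k => inb m k c) k).
        - by rewrite hc addKn.
        - by rewrite hc.
        - by move=> k' hk'; apply: (inb_uniq HmN hk'); rewrite hc.
      rewrite (@sum_uniq n C (fun k => z k (b - a)%N v) (fun k => cnd m k a b) k) //.
      by move=> k' hk'; have [hb' _] := cnd_inb HmN hk'; exact: (inb_uniq HmN hb' hb).
    have hd1 := @is_diff_ext C N _ _ w _ hz (hJd c).
    have heq := is_diff_uniq (HPOm w hw a b) hd1.
    have hMl l : M l a b = - J c l.
      by move/rowP: heq => /(_ l); rewrite !mxE => <-; rewrite opprK.
    rewrite (ToeE_blk HmN iN _ a hb).
    move: (hk); rewrite /cnd => /and3P[h1 h2 h3]; rewrite h1 h2 /= -hc Y0E !mxE -sumrN.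
    by apply: eq_bigr => l _; rewrite hMl !mxE mulrN.
  have hn' : forall k, ~~ cnd m k a b by apply/existsPn.
  have hz : forall v, (fun _ : 'rV[C]_N => 0 : C) v = Zmat m z v a b.
    by move=> v; rewrite mxE big1 // => k _; rewrite ifF //; exact: negbTE (hn' k).
  have hd1 := @is_diff_ext C N _ _ w _ hz (@is_diff0 C N w).
  have heq := is_diff_uniq (HPOm w hw a b) hd1.
  rewrite ToeE_none // oppr0 big1 // => l _.
  by move/rowP: heq => /(_ l); rewrite !mxE => /eqP; rewrite oppr_eq0 => /eqP ->; rewrite mulr0.
pose A : 'M[C]_N := \matrix_(l, j) Om w l iN j.
have hphi X : phi Om iN w X = X *m A.
  apply/rowP => j; rewrite /phi summxE (bigD1 j) //= big1 ?addr0.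
    rewrite !mxE !eqxx mulr1 /OmX summxE; apply: eq_bigr => l _; rewrite !mxE.
    done.
  by move=> j' hj'; rewrite !mxE eqxx /= eq_sym (negbTE hj') mulr0.
have hA X : X *m A = - (row iN (P w) *m Toe m iN (X *m J^T) *m invmx (P w)).
  have hS : \sum_(l < N) X 0 l *: M l = - Toe m iN (X *m J^T).
    by apply/matrixP => a b; rewrite summxE mxE -hMe; apply: eq_bigr => l _; rewrite mxE.
  have hOmX : OmX Om w X = P w *m (\sum_(l < N) X 0 l *: M l) *m invmx (P w).
    rewrite mulmx_sumr mulmx_suml /OmX; apply: eq_bigr => l _.
    by rewrite -scalemxAr -scalemxAl -hOm.
  have -> : X *m A = row iN (OmX Om w X).
    by apply/rowP => j; rewrite !mxE /OmX summxE; apply: eq_bigr => l _; rewrite !mxE.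
  by rewrite hOmX hS !row_mul mulmxN mulNmx.
have step1 : bijective (phi Om iN w) <-> (forall X : 'rV[C]_N, X *m A = 0 -> X = 0).
  split => [hb X hX | H].
    by apply: (@bij_inj _ _ _ hb X 0); rewrite !hphi hX mul0mx.
  have hu : A \in unitmx.
    rewrite -row_free_unit -kermx_eq0; apply/eqP/row_matrixP => i; rewrite row0.
    by apply: H; rewrite -row_mul mulmx_ker row0.
  by exists (fun Y => Y *m invmx A) => Y; rewrite hphi ?mulmxK ?mulmxKV.
have step2 : (forall X : 'rV[C]_N, X *m A = 0 -> X = 0) <->
    (forall Y : 'rV[C]_N, row iN (P w) *m Toe m iN Y = 0 -> Y = 0).
  split => [H Y hY | H X hX].
    have := H (Y *m invmx J^T); rewrite hA mulmxKV // hY mul0mx oppr0 => /(_ erefl) h0.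
    by rewrite -(mulmxKV hJt Y) h0 mul0mx.
  have h1 : row iN (P w) *m Toe m iN (X *m J^T) = 0.
    move: hX; rewrite hA => /eqP; rewrite oppr_eq0 => /eqP h.
    by rewrite -(mulmxK hQ (row iN (P w) *m Toe m iN (X *m J^T))) h mul0mx.
  have hY := H _ h1.
  by rewrite -(mulmxK hJt X) hY mul0mx.
rewrite step1 step2 (comb Hm HmN iN (row iN (P w))).
by split => H k a ha; have := H k a ha; rewrite mxE.
Qed.
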